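(* Let $\delta,\alpha\geq0$, $\theta\in[0,\alpha]$, $\sigma\in\mathbb{R}$, $\varepsilon\in(0,1)$, and let $\widehat{v}(t,\xi)$ solve $(1+|\xi|^{2\delta})\widehat{v}_{tt}+|\xi|^{2\theta}\widehat{v}_t+|\xi|^{2\alpha}\widehat{v}=0$. Define, for $|\xi|\geq\varepsilon$, $$\rho(\xi)=\begin{cases}\dfrac{\varepsilon^{2\alpha+2\delta-4\theta}|\xi|^{2\theta}}{2(1+|\xi|^{2\delta})}&\text{if }\alpha+\delta\geq2\theta,\\[2mm] \dfrac{\varepsilon^{-2\alpha+4\theta}|\xi|^{2\alpha-2\theta}}{4}&\text{if }\alpha+\delta<2\theta,\end{cases}$$ $$E(t,\xi)=\tfrac12(1+|\xi|^{2\delta})|\xi|^\sigma|\widehat{v}_t|^2+\tfrac12|\xi|^{2\alpha+\sigma}|\widehat{v}|^2+\rho(\xi)(1+|\xi|^{2\delta})|\xi|^\sigma\,\mathrm{Re}\{\widehat{v}_t\overline{\widehat{v}}\}+\tfrac12\rho(\xi)|\xi|^{2\theta+\sigma}|\widehat{v}|^2,$$ $$E_1(t,\xi)=\tfrac12|\xi|^{2\delta+\sigma}|\widehat{v}_t|^2+\tfrac12|\xi|^{2\alpha+\sigma}|\widehat{v}|^2.$$ Then $E$ and $E_1$ are equivalent for all $t\geq0$ and $|\xi|\geq\varepsilon$: there are constants $m,M>0$ independent of $t,\xi$ with $mE_1(t,\xi)\leq E(t,\xi)\leq ME_1(t,\xi)$.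
   Context: $\widehat{v}$, $\widehat{v}_t$ are evaluated at $(t,\xi)$; the bar denotes complex conjugation. *)

(* Defs.v *)
From Stdlib Require Import Reals.
From Coquelicot Require Import Coquelicot.
Open Scope R_scope.

Fixpoint sumsq (n : nat) (xi : nat -> R) : R :=
  match n with O => 0 | S k => sumsq k xi + xi k ^ 2 end.
Definition enorm (n : nat) (xi : nat -> R) : R := sqrt (sumsq n xi).

(* real power r^a for r >= 0, with the convention 0^0 = 1 and 0^a = 0 for a <> 0 *)
Definition pw (r a : R) : R :=
  if Req_EM_T r 0 then (if Req_EM_T a 0 then 1 else 0) else Rpower r a.

Definition rho (alpha delta theta eps r : R) : R :=
  if Rle_dec (2 * theta) (alpha + delta)
  then pw eps (2*alpha + 2*delta - 4*theta) * pw r (2*theta) / (2 * (1 + pw r (2*delta)))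
  else pw eps (-2*alpha + 4*theta) * pw r (2*alpha - 2*theta) / 4.

(* E(t,xi) with r = |xi|, w = v_t, u = v *)
Definition energyE (alpha delta theta sigma eps r : R) (w u : C) : R :=
  / 2 * (1 + pw r (2*delta)) * pw r sigma * (Cmod w) ^ 2
  + / 2 * pw r (2*alpha + sigma) * (Cmod u) ^ 2
  + rho alpha delta theta eps r * (1 + pw r (2*delta)) * pw r sigma * Re (w * Cconj u)
  + / 2 * rho alpha delta theta eps r * pw r (2*theta + sigma) * (Cmod u) ^ 2.

Definition energyE1 (alpha delta sigma r : R) (w u : C) : R :=
  / 2 * pw r (2*delta + sigma) * (Cmod w) ^ 2
  + / 2 * pw r (2*alpha + sigma) * (Cmod u) ^ 2.

(* Main.v *)
Require Import Defs.
From Stdlib Require Import Reals.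
From Coquelicot Require Import Coquelicot.
Open Scope R_scope.

From Stdlib Require Import Lra Psatz.
Lemma exple x y : x <= y -> exp x <= exp y.
Proof. intros [h|h]; [left; apply exp_increasing; auto | subst; lra]. Qed.

Lemma key a b c s rho K w1 w2 u1 u2 (ha: 0<a) (hb: 0<b) (hc:0<=c) (hs:0<s)
  (hr:0<=rho) (h1: rho^2*(1+a) <= b/4) (h2: rho*c <= b) (hK: 1+a <= K*a) (hK2 : 2 <= K) :
  /2 * (/2*(a*s)*(w1^2+w2^2) + /2*(b*s)*(u1^2+u2^2)) <=
    /2*(1+a)*s*(w1^2+w2^2) + /2*(b*s)*(u1^2+u2^2) + rho*(1+a)*s*(w1*u1+w2*u2) + /2*rho*(c*s)*(u1^2+u2^2)
  /\ /2*(1+a)*s*(w1^2+w2^2) + /2*(b*s)*(u1^2+u2^2) + rho*(1+a)*s*(w1*u1+w2*u2) + /2*rho*(c*s)*(u1^2+u2^2)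
    <= 2*K*(/2*(a*s)*(w1^2+w2^2) + /2*(b*s)*(u1^2+u2^2)).
Proof.
  assert (hW : 0 <= w1^2+w2^2) by (apply Rplus_le_le_0_compat; apply pow2_ge_0).
  assert (hU : 0 <= u1^2+u2^2) by (apply Rplus_le_le_0_compat; apply pow2_ge_0).
  assert (s1 : 0 <= (w1^2+w2^2)/4 + rho*(w1*u1+w2*u2) + rho^2*(u1^2+u2^2)).
  { assert (0 <= (w1+2*rho*u1)^2 + (w2+2*rho*u2)^2) by (apply Rplus_le_le_0_compat; apply pow2_ge_0). nra. }
  assert (s2 : rho*(w1*u1+w2*u2) <= (w1^2+w2^2)/2 + rho^2*(u1^2+u2^2)/2).
  { assert (0 <= (w1-rho*u1)^2 + (w2-rho*u2)^2) by (apply Rplus_le_le_0_compat; apply pow2_ge_0). nra. }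
  set (W := w1^2+w2^2) in *. set (U := u1^2+u2^2) in *. set (X := w1*u1+w2*u2) in *.
  set (E := /2*(1+a)*s*W + /2*(b*s)*U + rho*(1+a)*s*X + /2*rho*(c*s)*U).
  set (E1 := /2*(a*s)*W + /2*(b*s)*U).
  clearbody W U X.
  assert (t1 : 0 <= (1+a)*(W/4 + rho*X + rho^2*U)) by nra.
  assert (t2 : (1+a)*(rho*X) <= (1+a)*(W/2 + rho^2*U/2)) by nra.
  assert (t3 : rho^2*(1+a)*U <= b/4*U) by nra.
  assert (t4 : rho*c*U <= b*U) by nra.
  assert (t5 : (1+a)*W <= K*a*W) by nra.
  assert (LE : s * ((1+a)*W/4 + b*U/4) <= E).
  { unfold E. assert (0 <= s * ((1+a)*(W/4 + rho*X + rho^2*U) + (b/4*U - rho^2*(1+a)*U) + rho*c*U/2)).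
    { apply Rmult_le_pos; [lra|]. assert (0<= rho*c*U) by (apply Rmult_le_pos; nra). nra. }
    nra. }
  assert (UE : E <= s * (K*a*W + b*U*(9/8))).
  { unfold E. assert (0 <= s * ((1+a)*(W/2 + rho^2*U/2) - (1+a)*(rho*X) + (b/4*U - rho^2*(1+a)*U)/2
        + (b*U - rho*c*U)/2 + (K*a*W - (1+a)*W))) by (apply Rmult_le_pos; nra).
    nra. }
  split.
  - unfold E1. assert (0 <= s*W) by nra. nra.
  - unfold E1. assert (0 <= s*U*b) by (apply Rmult_le_pos; nra). nra.
Qed.

Lemma pwE r x : 0 < r -> pw r x = exp (x * ln r).
Proof. intros h. unfold pw. destruct (Req_EM_T r 0); [lra|]. reflexivity. Qed.

Lemma expsplit x y L : exp ((x+y)*L) = exp (x*L) * exp (y*L).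
Proof. rewrite <- exp_plus. f_equal. ring. Qed.

Lemma Cmod2 x y : Cmod (x,y) ^ 2 = x^2 + y^2.
Proof. unfold Cmod. simpl fst. simpl snd. rewrite pow2_sqrt; [ring|].
  apply Rplus_le_le_0_compat; apply pow2_ge_0. Qed.

Lemma point (delta alpha theta sigma eps r : R)
  (hdelta : 0 <= delta) (halpha : 0 <= alpha)
  (htheta : 0 <= theta <= alpha) (heps : 0 < eps < 1) (hr : eps <= r) (w u : C) :
  /2 * energyE1 alpha delta sigma r w u <= energyE alpha delta theta sigma eps r w u
  /\ energyE alpha delta theta sigma eps r w u
     <= 2 * (2 + exp (-2*delta*ln eps)) * energyE1 alpha delta sigma r w u.
Proof.
  assert (r0 : 0 < r) by lra.
  assert (hl : ln eps < 0). { rewrite <- ln_1. apply ln_increasing; lra. }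
  assert (hlL : ln eps <= ln r) by (apply ln_le; lra).
  set (l := ln eps) in *. set (L := ln r) in *.
  unfold energyE, energyE1, rho.
  rewrite !(pwE r) by lra. rewrite !(pwE eps) by lra. fold l L.
  rewrite !expsplit.
  destruct w as [w1 w2]; destruct u as [u1 u2].
  rewrite !Cmod2.
  replace (Re ((w1, w2) * Cconj (u1, u2))) with (w1*u1+w2*u2)
    by (unfold Cconj, Cmult, Re; simpl; ring).
  set (K := 2 + exp (-2*delta*l)).
  assert (ha : 0 < exp (2*delta*L)) by apply exp_pos.
  assert (hb : 0 < exp (2*alpha*L)) by apply exp_pos.
  assert (hc : 0 < exp (2*theta*L)) by apply exp_pos.
  assert (hs : 0 < exp (sigma*L)) by apply exp_pos.
  assert (hK : 1 + exp (2*delta*L) <= K * exp (2*delta*L)).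
  { unfold K. rewrite Rmult_plus_distr_r, <- exp_plus.
    assert (1 <= exp (-2*delta*l + 2*delta*L)).
    { rewrite <- exp_0. apply exple. nra. }
    lra. }
  assert (hK2 : 2 <= K). { unfold K. pose proof (exp_pos (-2*delta*l)). lra. }
  set (a := exp (2*delta*L)) in *. set (b := exp (2*alpha*L)) in *.
  set (c := exp (2*theta*L)) in *. set (s := exp (sigma*L)) in *.
  destruct (Rle_dec (2 * theta) (alpha + delta)) as [H|H].
  - set (P := exp ((2 * alpha + 2 * delta - 4 * theta) * l)).
    assert (hP : 0 < P) by apply exp_pos.
    assert (e1 : P*P*(c*c) <= a*b).
    { unfold P, a, b, c. rewrite <- !exp_plus. apply exple. nra. }
    assert (e2 : P*(c*c) <= a*b).
    { unfold P, a, b, c. rewrite <- !exp_plus. apply exple. nra. }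
    apply key; try lra.
    + apply Rmult_le_pos; [nra|]. apply Rlt_le, Rinv_0_lt_compat. lra.
    + replace ((P * c / (2 * (1 + a))) ^ 2 * (1 + a)) with (P*P*(c*c) * / (4*(1+a)))
        by (field; lra).
      apply Rle_trans with ((1+a)*b * / (4*(1+a))).
      * apply Rmult_le_compat_r; [apply Rlt_le, Rinv_0_lt_compat; lra | nra].
      * right. field. lra.
    + replace (P * c / (2 * (1 + a)) * c) with (P*(c*c) * / (2*(1+a)))
        by (field; lra).
      apply Rle_trans with ((1+a)*b * / (2*(1+a))).
      * apply Rmult_le_compat_r; [apply Rlt_le, Rinv_0_lt_compat; lra | nra].
      * replace ((1+a)*b * / (2*(1+a))) with (b/2) by (field; lra). lra.
  - set (Q := exp (-2 * alpha * l) * exp (4 * theta * l)).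
    set (d := exp ((2 * alpha - 2 * theta) * L)).
    assert (hQ : 0 < Q) by (unfold Q; rewrite <- exp_plus; apply exp_pos).
    assert (hd : 0 < d) by apply exp_pos.
    assert (Q1 : Q <= 1). { unfold Q. rewrite <- exp_plus, <- exp_0. apply exple. nra. }
    assert (dc : d * c = b).
    { unfold d, c, b. rewrite <- exp_plus. f_equal. ring. }
    assert (f1 : Q*Q*(d*d) <= b).
    { unfold Q, d, b. rewrite <- !exp_plus. apply exple. nra. }
    assert (f2 : Q*Q*(d*d)*a <= b).
    { unfold Q, d, b, a. rewrite <- !exp_plus. apply exple. nra. }
    apply key; try lra.
    + unfold Rdiv; apply Rmult_le_pos; [apply Rmult_le_pos; lra | apply Rlt_le, Rinv_0_lt_compat; lra].
    + replace (Q * d / 4 * c) with (Q * (d*c) / 4) by field. rewrite dc. nra.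
Qed.

Theorem lemma3p2 (n : nat) (delta alpha theta sigma eps : R)
  (hdelta : 0 <= delta) (halpha : 0 <= alpha)
  (htheta : 0 <= theta <= alpha) (heps : 0 < eps < 1)
  (v v1 v2 : (nat -> R) -> R -> C)
  (hv : forall xi t, is_derive (v xi) t (v1 xi t))
  (hv1 : forall xi t, is_derive (v1 xi) t (v2 xi t))
  (hode : forall xi (t : R),
     (RtoC (1 + pw (enorm n xi) (2*delta)) * v2 xi t
     + RtoC (pw (enorm n xi) (2*theta)) * v1 xi t
     + RtoC (pw (enorm n xi) (2*alpha)) * v xi t)%C = RtoC 0) :
  exists m M : R, 0 < m /\ 0 < M /\
    forall (t : R) (xi : nat -> R), 0 <= t -> eps <= enorm n xi ->
      m * energyE1 alpha delta sigma (enorm n xi) (v1 xi t) (v xi t)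
        <= energyE alpha delta theta sigma eps (enorm n xi) (v1 xi t) (v xi t)
      /\ energyE alpha delta theta sigma eps (enorm n xi) (v1 xi t) (v xi t)
        <= M * energyE1 alpha delta sigma (enorm n xi) (v1 xi t) (v xi t).
Proof.
  exists (/2), (2 * (2 + exp (-2*delta*ln eps))).
  split; [lra|]. split.
  { pose proof (exp_pos (-2*delta*ln eps)). lra. }
  intros t xi _ hr. apply point; auto.
Qed.
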